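(* There exist absolute constants $c>0$ and $d_0$ such that for every integer $d\geqslant d_0$ and every integer $m\geqslant 1$, if $H$ is the disjoint union of $m$ copies of $H^{mod}_d$ and $n=3dm$ is its number of vertices, then $$\frac{2}{3}+\frac{\log_2 3}{3d} + c\,\frac{3^d}{d\,4^d}\ \leqslant\ \frac{\log_2 i(H)}{n}\ \leqslant\ \frac 23+\frac{\log_2 3}{3d}+\frac{1}{c}(1-c)^d .$$
   Context: For a hypergraph $H=(V,E)$, a set $W\subseteq V$ is independent if no edge $e\in E$ satisfies $e\subseteq W$; $i(H)$ denotes the number of independent sets of $H$ (the empty set included). The hypergraph $H^{mod}_d=(V,E)$ has vertex set $V=V_1\sqcup V_2\sqcup V_3$, where each $V_i$ is a disjoint copy of $\mathbb{Z}/d\mathbb{Z}$, and edge set $E=\{\{x,y,z\}: x\in V_1,\ y\in V_2,\ z\in V_3,\ x+y\equiv z \pmod d\}$. Logarithms are to base $2$. *)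

(* Defs.v *)
From mathcomp Require Import all_boot.
From Stdlib Require Import Reals.

Set Implicit Arguments.
Unset Strict Implicit.
Unset Printing Implicit Defensive.

Definition independent (V : finType) (E : {set {set V}}) (W : {set V}) : bool :=
  [forall e in E, ~~ (e \subset W)].

Definition num_indep (V : finType) (E : {set {set V}}) : nat :=
  #|[set W : {set V} | independent E W]|.

(* H^mod_d: vertex set V1 ⊔ V2 ⊔ V3 encoded as 'I_3 * 'I_d (the copy index,
   then an element of Z/dZ represented by 0..d-1). *)
Definition Hmod_vertex (d : nat) : finType := ('I_3 * 'I_d)%type.

Definition Hmod_edges (d : nat) : {set {set Hmod_vertex d}} :=
  [set e : {set Hmod_vertex d} |
    [exists x : 'I_d, exists y : 'I_d, exists z : 'I_d,
      (((x + y) %% d)%N == z) &&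
      (e == [set (@Ordinal 3 0 isT, x); (@Ordinal 3 1 isT, y); (@Ordinal 3 2 isT, z)])]].

Definition disj_union_edges (V : finType) (E : {set {set V}}) (m : nat)
  : {set {set ('I_m * V)%type}} :=
  [set e : {set ('I_m * V)%type} |
    [exists j : 'I_m, exists f in E, e == [set (j, v) | v in f]]].

Definition log2 (x : R) : R := ln x / ln 2.

(* Main.v *)
Require Import Defs.
From mathcomp Require Import all_boot all_algebra.
From Stdlib Require Import Reals Lra.
From mathcomp Require Import ssrnat zify.
Set Implicit Arguments.
Unset Strict Implicit.
Unset Printing Implicit Defensive.
Import GRing.Theory.
Section Graph.
Variables (T : finType) (adj : rel T).
Hypothesis adj_sym : forall x y, adj x y = adj y x.
Hypothesis adj_irr : forall x, adj x x = false.
Hypothesis deg4 : forall x, #|[set y | adj x y]| <= 4.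

Definition nb (U : {set T}) x := [set y in U | adj x y].
Definition deg U x := #|nb U x|.
Definition Dsum (U : {set T}) := \sum_(x in U) deg U x.
Definition gind (W : {set T}) := [forall x in W, forall y in W, ~~ adj x y].
Definition gcount (U : {set T}) := #|[set W : {set T} | (W \subset U) && gind W]|.

Lemma sum_bool (A : {set T}) (b : pred T) :
  \sum_(x in A) (b x : nat) = #|[set x in A | b x]|.
Proof.
transitivity (\sum_(x in A | b x) 1)%N.
  by rewrite [RHS]big_mkcondr /=; apply: eq_bigr => x _; case: (b x).
by rewrite -sum1_card; apply: eq_bigl => x; rewrite inE.
Qed.

Lemma deg_le4 (U : {set T}) (x : T) : deg U x <= 4.
Proof.
apply: leq_trans (deg4 x); apply: subset_leq_card; apply/subsetP => y.
by rewrite !inE => /andP[].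
Qed.

Lemma deg_split (U : {set T}) (v x : T) : deg U x = (v \in nb U x) + deg (U :\ v) x.
Proof.
rewrite /deg (cardsD1 v (nb U x)); congr (_ + _).
by apply: eq_card => y; rewrite !inE andbA.
Qed.

Lemma Dsum_U1 (U : {set T}) (v : T) : v \in U -> Dsum U <= Dsum (U :\ v) + 2 * deg U v.
Proof.
move=> vU; rewrite /Dsum (bigD1 v) //=.
rewrite (eq_bigl (fun x => x \in U :\ v)); last by move=> x; rewrite !inE andbC.
rewrite (eq_bigr (fun x => (v \in nb U x : nat) + deg (U :\ v) x)); last first.
  by move=> x _; rewrite (deg_split U v x).
rewrite big_split /= sum_bool.
have : #|[set x in U :\ v | v \in nb U x]| <= deg U v.
  apply: subset_leq_card; apply/subsetP => y; rewrite !inE => /andP[/andP[_ yU]].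
  by move/andP=> [_]; rewrite adj_sym => ->; rewrite yU.
lia.
Qed.

Lemma Dsum_U2 (U : {set T}) (v : T) k : v \in U -> (forall x, x \in U -> deg U x <= k) ->
  deg U v = k -> Dsum U <= Dsum (U :\: (v |: nb U v)) + 2 * (k * k).
Proof.
move=> vU hk dv; set N' := v |: nb U v; set U2 := U :\: N'.
have vnb : v \notin nb U v by rewrite inE adj_irr andbF.
have cN : #|N'| = k.+1 by rewrite cardsU1 vnb -dv.
have sN : N' \subset U.
  by apply/subsetP => y; rewrite !inE => /orP[/eqP->//|/andP[]].
rewrite /Dsum (big_setID N') /=.
have -> : U :&: N' = N' by apply/setIidPr.
have h1 : \sum_(x in N') deg U x <= k.+1 * k.
  rewrite -cN -sum_nat_const; apply: leq_sum => x xN.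
  by apply: hk; move/subsetP: sN; apply.
have h2 : forall x, x \in U2 -> deg U x = #|[set y in nb U v | adj x y]| + deg U2 x.
  move=> x; rewrite !inE => /andP[xN xU].
  have axv : adj x v = false.
    by move: xN; rewrite ?inE negb_or xU /= adj_sym => /andP[_ /negbTE].
  rewrite /deg -(cardsID N' (nb U x)); congr (_ + _); apply: eq_card => y; rewrite !inE.
    case: (y =P v) => [->|_] /=; first by rewrite axv adj_irr !andbF.
    by case: (y \in U); case: (adj x y); case: (adj v y).
  by case: (y \in U); case: (adj x y); case: (y == v); case: (adj v y).
rewrite (eq_bigr _ h2) big_split /=.
have h3 : \sum_(x in U2) #|[set y in nb U v | adj x y]| <= k * (k - 1).
  have -> : \sum_(x in U2) #|[set y in nb U v | adj x y]| =
            \sum_(x in U2) \sum_(y in nb U v) (adj x y : nat).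
    by apply: eq_bigr => x _; rewrite sum_bool.
  rewrite exchange_big /=.
  have -> : (k * (k - 1) = \sum_(y in nb U v) (k - 1))%N by rewrite sum_nat_const -dv.
  apply: leq_sum => y yN.
  rewrite (eq_bigr (fun x => (adj y x : nat))); last by move=> x _; rewrite adj_sym.
  rewrite sum_bool.
  have vy : v \in nb U y by rewrite inE vU /= adj_sym; move: yN; rewrite inE => /andP[].
  have : #|[set x in U2 | adj y x]| <= #|nb U y :\ v|.
    apply: subset_leq_card; apply/subsetP => x; rewrite !inE => /andP[/andP[xN xU] ->].
    rewrite xU andbT andbT; by move: xN; rewrite negb_or => /andP[].
  have yU : y \in U by move: yN; rewrite inE => /andP[].
  have := hk y yU; rewrite /deg (cardsD1 v (nb U y)) vy /=.
  lia.
have k1 : k.+1 * k + k * (k - 1) = 2 * (k * k) by case: k {hk dv cN h1 h3} => [|k]; lia.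
lia.
Qed.

Lemma gcount_le (U : {set T}) : gcount U <= 2 ^ #|U|.
Proof.
rewrite -card_powerset; apply: subset_leq_card; apply/subsetP => W.
by rewrite !inE => /andP[].
Qed.

Lemma gcount_split (U : {set T}) (v : T) : v \in U ->
  gcount U <= gcount (U :\ v) + gcount (U :\: (v |: nb U v)).
Proof.
move=> vU; rewrite /gcount.
set S := [set W : {set T} | (W \subset U) && gind W].
rewrite -(cardsID [set W : {set T} | v \in W] S) addnC leq_add //.
  apply: subset_leq_card; apply/subsetP => W; rewrite !inE => /andP[vW /andP[WU ->]].
  rewrite andbT; apply/subsetP => x xW; rewrite !inE (subsetP WU) // andbT.
  by apply: contraNneq vW => <-.
have inj : {in S :&: [set W : {set T} | v \in W] &, injective (fun W => W :\ v)}.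
  move=> W1 W2; rewrite !inE => /andP[_ h1] /andP[_ h2] e.
  by rewrite -(setD1K h1) -(setD1K h2) e.
rewrite -(card_in_imset inj); apply: subset_leq_card; apply/subsetP => W'.
move=> /imsetP[W]; rewrite !inE => /andP[/andP[WU gW] vW] ->.
apply/andP; split.
  apply/subsetP => x; rewrite !inE => /andP[xv xW].
  rewrite (subsetP WU) // andbT negb_or xv /=.
  by move: gW; rewrite /gind => /forallP /(_ v) /implyP /(_ vW) /forallP /(_ x) /implyP /(_ xW).
apply/forallP => x; apply/implyP; rewrite inE => /andP[_ xW].
apply/forallP => y; apply/implyP; rewrite inE => /andP[_ yW].
by move: gW; rewrite /gind => /forallP /(_ x) /implyP /(_ xW) /forallP /(_ y) /implyP /(_ yW).
Qed.

Open Scope R_scope.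

Lemma INR_expn a n : INR (expn a n) = INR a ^ n.
Proof. elim: n => [|n IH] //=; by rewrite expnS -multE mult_INR IH. Qed.

Lemma INR_add a b : INR (a + b)%N = INR a + INR b.
Proof. by rewrite -plusE plus_INR. Qed.

Lemma INR_mul a b : INR (a * b)%N = INR a * INR b.
Proof. by rewrite -multE mult_INR. Qed.

Lemma num_branch k : (1 <= k <= 4)%N ->
  2 ^ k * (53/50) ^ (2 * k) + (53/50) ^ (2 * (k * k)) <= 2 ^ k.+1.
Proof.
case: k => [|[|[|[|[|k]]]]] //= _; lra.
Qed.

Lemma gbound_aux n : forall U : {set T}, (#|U| <= n)%N ->
  INR (gcount U) * (53/50) ^ (Dsum U) <= 2 ^ #|U|.
Proof.
elim: n => [|n IH] U hU.
  have U0 : U = set0 by apply/eqP; rewrite -cards_eq0; lia.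
  subst U; rewrite /Dsum big_set0 /= cards0 Rmult_1_r.
  have : (gcount set0 <= 1)%N by have := gcount_le set0; rewrite cards0.
  move/leP/le_INR; rewrite /=; lra.
case: (boolP [exists x in U, (0 < deg U x)%N]) => [/existsP[x0 /andP[x0U dx0]]|].
  pose v := [arg max_(x > x0 in U) deg U x].
  have [vU vmax] : v \in U /\ forall x, x \in U -> (deg U x <= deg U v)%N.
    rewrite /v; case: arg_maxnP => //= y yU ym; split => // x xU; exact: ym.
  set k := deg U v.
  have k1 : (1 <= k)%N by apply: leq_trans dx0 (vmax _ x0U).
  have k4 : (k <= 4)%N by apply: deg_le4.
  set U1 := U :\ v; set U2 := U :\: (v |: nb U v).
  have vnb : v \notin nb U v by rewrite inE adj_irr andbF.
  have sN : v |: nb U v \subset U.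
    by apply/subsetP => y; rewrite !inE => /orP[/eqP->//|/andP[]].
  have cU1 : #|U| = (#|U1| + 1)%N.
    by rewrite [LHS](cardsD1 v U) vU /= addnC.
  have cU2 : #|U| = (#|U2| + k + 1)%N.
    rewrite /U2 (cardsDS sN) cardsU1 vnb -/k.
    have := subset_leq_card sN; rewrite cardsU1 vnb /=; rewrite -/(deg U v) -/k; lia.
  have IH1 := IH U1 ltac:(lia).
  have IH2 := IH U2 ltac:(lia).
  have D1 := Dsum_U1 vU.
  have D2 := Dsum_U2 vU vmax (erefl k).
  set q := 53/50.
  have q1 : 1 <= q by rewrite /q; lra.
  have e1 : q ^ Dsum U <= q ^ Dsum U1 * q ^ (2 * k).
    rewrite -pow_add; apply: Rle_pow => //; apply/leP; rewrite -/k in D1; exact: D1.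
  have e2 : q ^ Dsum U <= q ^ Dsum U2 * q ^ (2 * (k * k)).
    rewrite -pow_add; apply: Rle_pow => //; apply/leP; exact: D2.
  have hs := gcount_split vU.
  have hsR : INR (gcount U) <= INR (gcount U1) + INR (gcount U2).
    rewrite -plus_INR; apply: le_INR; apply/leP; exact: hs.
  have nb := num_branch (k := k) ltac:(lia).
  have p0 : 0 <= q ^ Dsum U by apply: pow_le; lra.
  have g1 : 0 <= INR (gcount U1) := pos_INR _.
  have g2 : 0 <= INR (gcount U2) := pos_INR _.
  have t1 : INR (gcount U1) * q ^ Dsum U <= 2 ^ #|U1| * q ^ (2 * k).
    apply: Rle_trans (Rmult_le_compat_l _ _ _ g1 e1) _.
    rewrite -Rmult_assoc; apply: Rmult_le_compat_r => //; apply: pow_le; lra.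
  have t2 : INR (gcount U2) * q ^ Dsum U <= 2 ^ #|U2| * q ^ (2 * (k * k)).
    apply: Rle_trans (Rmult_le_compat_l _ _ _ g2 e2) _.
    rewrite -Rmult_assoc; apply: Rmult_le_compat_r => //; apply: pow_le; lra.
  have eU1 : 2 ^ #|U1| = 2 ^ #|U2| * 2 ^ k.
    rewrite -pow_add; congr (2 ^ _); lia.
  have eU : 2 ^ #|U| = 2 ^ #|U2| * 2 ^ k.+1.
    rewrite -pow_add; congr (2 ^ _); lia.
  have p2 : 0 <= 2 ^ #|U2| by apply: pow_le; lra.
  rewrite eU; rewrite eU1 in t1.
  apply: Rle_trans (Rmult_le_compat_r _ _ _ p0 hsR) _.
  rewrite Rmult_plus_distr_r.
  apply: Rle_trans (Rplus_le_compat _ _ _ _ t1 t2) _.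
  rewrite Rmult_assoc -Rmult_plus_distr_l.
  by apply: Rmult_le_compat_l.
rewrite negb_exists => /forallP h0.
have D0 : Dsum U = 0%N.
  rewrite /Dsum big1 // => x xU; move: (h0 x); rewrite xU /=; lia.
rewrite D0 /= Rmult_1_r.
have := gcount_le U; move/leP/le_INR; rewrite INR_expn (_ : INR 2 = 2); [lra|simpl; lra].
Qed.

Lemma gbound (U : {set T}) : INR (gcount U) * (53/50) ^ (Dsum U) <= 2 ^ #|U|.
Proof. exact: (@gbound_aux #|U|). Qed.

End Graph.
Section Gen.
Variables (X Y : finType).

Lemma sum_boolG (A : {set X}) (b : pred X) :
  \sum_(x in A) (b x : nat) = #|[set x in A | b x]|.
Proof.
transitivity (\sum_(x in A | b x) 1)%N.
  by rewrite [RHS]big_mkcondr /=; apply: eq_bigr => x _; case: (b x).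
by rewrite -sum1_card; apply: eq_bigl => x; rewrite inE.
Qed.

Lemma card_cover (A : {set X}) (I : {set Y}) (B : Y -> {set X}) :
  (forall x, x \in A -> exists2 i, i \in I & x \in B i) ->
  #|A| <= \sum_(i in I) #|B i|.
Proof.
move=> hc.
apply: (@leq_trans (\sum_(x in A) \sum_(i in I) (x \in B i : nat))).
  rewrite -sum1_card; apply: leq_sum => x xA.
  have [i iI xB] := hc x xA.
  by rewrite (bigD1 i) //= xB.
rewrite exchange_big /=; apply: leq_sum => i _.
rewrite sum_boolG; apply: subset_leq_card; apply/subsetP => x.
by rewrite inE => /andP[].
Qed.

Lemma cardU_le (A B : {set X}) : #|A :|: B| <= #|A| + #|B|.
Proof. by rewrite -cardsUI leq_addr. Qed.

Lemma INR_sum_le (I : {set Y}) (f : Y -> nat) (K : R) :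
  (forall i, i \in I -> INR (f i) <= K)%R ->
  (INR (\sum_(i in I) f i) <= INR #|I| * K)%R.
Proof.
move=> h; rewrite -sum1_card.
apply: (big_rec2 (fun a b => INR a <= INR b * K)%R).
  by rewrite /=; lra.
move=> i a b iI hab; rewrite !INR_add.
have := h i iI; rewrite (_ : INR 1 = 1%R) //; nra.
Qed.

End Gen.

Section Hyp.
Local Open Scope ring_scope.
Variable n : nat.
Local Notation D := 'I_n.+1.
Local Notation V := (Hmod_vertex n.+1).
Definition p0 : 'I_3 := @Ordinal 3 0 isT.
Definition p1 : 'I_3 := @Ordinal 3 1 isT.
Definition p2 : 'I_3 := @Ordinal 3 2 isT.

Definition Hind (W : {set V}) := [forall x : D, forall y : D,
  ~~ [&& (p0, x) \in W, (p1, y) \in W & (p2, x + y) \in W]].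

Lemma addE (x y : D) : (((x : nat) + y) %% n.+1)%N = (x + y : D).
Proof. by []. Qed.

Lemma indepP (W : {set V}) : independent (Hmod_edges n.+1) W = Hind W.
Proof.
apply/idP/idP.
  move=> /forallP hW; apply/forallP => x; apply/forallP => y.
  have := hW [set (p0, x); (p1, y); (p2, x + y)]; rewrite inE.
  case: (boolP (_ \subset W)); last first.
    move=> hs _; apply: contra hs => /and3P[a b c].
    by rewrite !subUset !sub1set a b c.
  move=> _; rewrite implybF => /negP; case; apply/existsP; exists x.
  apply/existsP; exists y; apply/existsP; exists (x + y); apply/andP; split; exact/eqP.
move=> /forallP hW; apply/forallP => e; apply/implyP; rewrite inE.
move=> /existsP[x /existsP[y /existsP[z /andP[hz /eqP ->]]]].
have <- : x + y = z by apply: val_inj; exact/eqP.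
apply/negP; rewrite !subUset !sub1set => /andP[/andP[a b] c].
by move: (hW x) => /forallP /(_ y); rewrite a b c.
Qed.

Lemma Hind_triple (W : {set V}) x y z : Hind W -> x + y = z ->
  (p0, x) \in W -> (p1, y) \in W -> (p2, z) \in W -> False.
Proof.
move=> /forallP /(_ x) /forallP /(_ y) h <- a b c.
by move: h; rewrite a b c.
Qed.

Definition Anch := (D * D * D * D * D * D)%type.

Definition nbrs (al : Anch) (u : V) : seq V :=
  let: (a1, a2, b1, b2, c1, c2) := al in
  let: (i, x) := u in
  if i == p0 then [:: (p1, c1 - x); (p1, c2 - x); (p2, x + b1); (p2, x + b2)]
  else if i == p1 then [:: (p0, c1 - x); (p0, c2 - x); (p2, a1 + x); (p2, a2 + x)]
  else [:: (p0, x - b1); (p0, x - b2); (p1, x - a1); (p1, x - a2)].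

Definition adjA (al : Anch) : rel V := fun u v => v \in nbrs al u.

Lemma subKr' (c x : D) : c - (c - x) = x.
Proof. by rewrite opprB addrC subrK. Qed.
Lemma addKl' (a x : D) : a + x - a = x.
Proof. by rewrite addrC addKr. Qed.
Lemma addsub' (a x : D) : a + (x - a) = x.
Proof. by rewrite addrC subrK. Qed.

Lemma V_cases (u : V) : u = (p0, u.2) \/ u = (p1, u.2) \/ u = (p2, u.2).
Proof.
case: u => [[[|[|[|m]]] Hi] x] /=.
- by left; congr (_, _); apply: val_inj.
- by right; left; congr (_, _); apply: val_inj.
- by right; right; congr (_, _); apply: val_inj.
- by [].
Qed.

Lemma adjA_sym1 al u v : adjA al u v -> adjA al v u.
Proof.
case: al => [[[[[a1 a2] b1] b2] c1] c2].
rewrite /adjA /=.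
case: (V_cases u) => [->|[->|->]] /=; rewrite !inE;
  case/orP => [|/orP[|/orP[]]] /eqP -> /=; rewrite !inE ?subKr' ?addrK ?subrK ?addKl' ?addsub' eqxx ?orbT //.
Qed.

Lemma adjA_sym al u v : adjA al u v = adjA al v u.
Proof. by apply/idP/idP; apply: adjA_sym1. Qed.

Lemma adjA_irr al u : adjA al u u = false.
Proof.
case: al => [[[[[a1 a2] b1] b2] c1] c2]; rewrite /adjA /=.
by case: (V_cases u) => [->|[->|->]] /=; rewrite !inE !xpair_eqE.
Qed.

Lemma adjA_deg4 al u : (#|[set v | adjA al u v]| <= 4)%N.
Proof.
apply: (@leq_trans #|nbrs al u|).
  by apply: subset_leq_card; apply/subsetP => v; rewrite inE.
apply: leq_trans (card_size _) _.
case: al => [[[[[a1 a2] b1] b2] c1] c2]; rewrite /nbrs.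
by case: u => i x; case: ifP => _ //; case: ifP.
Qed.

Definition Good (al : Anch) : bool :=
  let: (a1, a2, b1, b2, c1, c2) := al in [&& a1 != a2, b1 != b2 & c1 != c2].

Lemma eq_subr (x a b : D) : (a - x == b - x) = (a == b).
Proof. by apply/eqP/eqP => [h|->//]; exact: (subIr x) h. Qed.
Lemma eq_subl (x a b : D) : (x - a == x - b) = (a == b).
Proof. by apply/eqP/eqP => [h|->//]; exact: (subrI x) h. Qed.
Lemma eq_addl (x a b : D) : (x + a == x + b) = (a == b).
Proof. by apply/eqP/eqP => [h|->//]; exact: (addrI x) h. Qed.
Lemma eq_addr (x a b : D) : (a + x == b + x) = (a == b).
Proof. by apply/eqP/eqP => [h|->//]; exact: (addIr x) h. Qed.

Lemma nbrs_uniq al u : Good al -> uniq (nbrs al u).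
Proof.
case: al => [[[[[a1 a2] b1] b2] c1] c2] /= /and3P[ha hb hc].
case: (V_cases u) => [->|[->|->]] /=; rewrite !inE !xpair_eqE /=;
  by rewrite ?orbF ?eq_subr ?eq_subl ?eq_addl ?eq_addr ?eqr_opp ?ha ?hb ?hc.
Qed.

Lemma adjA_deg al u : Good al -> #|[set v | adjA al u v]| = 4%N.
Proof.
move=> g; have -> : #|[set v | adjA al u v]| = #|nbrs al u|.
  by apply: eq_card => v; rewrite inE.
rewrite (card_uniqP (nbrs_uniq u g)).
case: al g => [[[[[a1 a2] b1] b2] c1] c2] _ /=.
by case: u => i x; case: ifP => _ //; case: ifP.
Qed.

Lemma anch_gind (W : {set V}) a1 a2 b1 b2 c1 c2 : Hind W ->
  (p0, a1) \in W -> (p0, a2) \in W -> (p1, b1) \in W -> (p1, b2) \in W ->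
  (p2, c1) \in W -> (p2, c2) \in W ->
  gind (adjA (a1, a2, b1, b2, c1, c2)) W.
Proof.
move=> hW A1 A2 B1 B2 C1 C2.
apply/forallP => u; apply/implyP => uW; apply/forallP => v; apply/implyP => vW.
apply/negP; rewrite /adjA /=.
case: (V_cases u) uW => [->|[->|->]] uW /=; rewrite !inE;
  case/orP => [|/orP[|/orP[]]] /eqP hv; rewrite hv in vW.
- by apply: (Hind_triple hW _ uW vW C1); rewrite addrC subrK.
- by apply: (Hind_triple hW _ uW vW C2); rewrite addrC subrK.
- exact: (Hind_triple hW _ uW B1 vW).
- exact: (Hind_triple hW _ uW B2 vW).
- by apply: (Hind_triple hW _ vW uW C1); rewrite subrK.
- by apply: (Hind_triple hW _ vW uW C2); rewrite subrK.
- exact: (Hind_triple hW _ A1 uW vW).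
- exact: (Hind_triple hW _ A2 uW vW).
- by apply: (Hind_triple hW _ vW B1 uW); rewrite subrK.
- by apply: (Hind_triple hW _ vW B2 uW); rewrite subrK.
- by apply: (Hind_triple hW _ A1 vW uW); rewrite addsub'.
- by apply: (Hind_triple hW _ A2 vW uW); rewrite addsub'.
Qed.

Definition pt (i : 'I_3) (W : {set V}) : {set D} := [set x | (i, x) \in W].

Lemma Dsum_adjA al : Good al -> Dsum (adjA al) setT = (12 * n.+1)%N.
Proof.
move=> g; rewrite /Dsum (eq_bigr (fun _ => 4%N)); last first.
  move=> x _; rewrite /deg -(adjA_deg x g); apply: eq_card => y; by rewrite !inE.
by rewrite sum_nat_const cardsT card_prod !card_ord; lia.
Qed.

Lemma gcount_anch al : Good al ->
  (INR (gcount (adjA al) setT) * (53/50) ^ (12 * n.+1) <= 2 ^ (3 * n.+1))%R.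
Proof.
move=> g; rewrite -(Dsum_adjA g).
have := gbound (@adjA_sym al) (@adjA_irr al) (@adjA_deg4 al) setT.
by rewrite cardsT card_prod !card_ord.
Qed.

Lemma I_cases (i : 'I_3) : i = p0 \/ i = p1 \/ i = p2.
Proof.
case: i => [[|[|[|m]]] Hi].
- by left; apply: val_inj.
- by right; left; apply: val_inj.
- by right; right; apply: val_inj.
- by [].
Qed.

Lemma Hind_pt (W : {set V}) i : pt i W = set0 -> Hind W.
Proof.
move=> h; apply/forallP => x; apply/forallP => y; apply/negP => /and3P[a b c].
have := in_set0 x; have := in_set0 y; have := in_set0 (x + y); rewrite -h !inE.
by case: (I_cases i) => [->|[->|->]]; rewrite ?a ?b ?c.
Qed.

Definition code (g h : D -> V) (W : {set V}) : {ffun D -> 'I_3} :=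
  [ffun y => if g y \in W then p1 else if h y \in W then p2 else p0].

Lemma card_code (F : {set {set V}}) (i : 'I_3) (S : {set D}) (g h : D -> V) :
  (forall W, W \in F -> pt i W = S) ->
  (forall W y, W \in F -> ~~ ((g y \in W) && (h y \in W))) ->
  (forall v : V, v.1 != i -> exists y, v = g y \/ v = h y) ->
  (#|F| <= 3 ^ n.+1)%N.
Proof.
move=> hS hx hc.
have inj : {in F &, injective (code g h)}.
  move=> W1 W2 F1 F2 e; apply/setP => v.
  case: (boolP (v.1 == i)) => [/eqP vi|vi].
    have -> : v = (i, v.2) by rewrite -vi; case: v {vi}.
    have := hS W1 F1; have := hS W2 F2; move=> h2 h1.
    have m : forall W : {set V}, ((i, v.2) \in W) = (v.2 \in pt i W) by move=> W; rewrite inE.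
    by rewrite !m h1 h2.
  have [y hy] := hc v vi.
  have ey := congr1 (fun f : {ffun D -> 'I_3} => nat_of_ord (f y)) e; rewrite /= !ffunE in ey.
  have x1 := hx W1 y F1; have x2 := hx W2 y F2.
  case: hy => ->; move: ey x1 x2;
    case: (g y \in W1); case: (g y \in W2); case: (h y \in W1); case: (h y \in W2) => //=.
rewrite -(card_in_imset inj).
apply: leq_trans (max_card _) _.
by rewrite card_ffun !card_ord.
Qed.

Lemma card_S (i : 'I_3) (a : D) :
  (#|[set W : {set V} | Hind W && (pt i W == [set a])]| <= 3 ^ n.+1)%N.
Proof.
set F := [set W : {set V} | _].
have memF : forall W, W \in F -> Hind W /\ (i, a) \in W.
  move=> W; rewrite inE => /andP[hW /eqP hp]; split => //.
  have : a \in pt i W by rewrite hp set11.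
  by rewrite inE.
case: (I_cases i) => ei; [|case: ei => ei]; subst i.
- apply: (@card_code F p0 [set a] (fun y => (p1, y)) (fun y => (p2, a + y))).
  + by move=> W; rewrite inE => /andP[_ /eqP].
  + move=> W y /memF[hW aW]; apply/negP => /andP[b c].
    exact: (Hind_triple hW (erefl _) aW b c).
  + move=> v; case: (V_cases v) => [->|[->|->]] //= _.
      by exists v.2; left.
    by exists (v.2 - a); right; rewrite addsub'.
- apply: (@card_code F p1 [set a] (fun y => (p0, y)) (fun y => (p2, y + a))).
  + by move=> W; rewrite inE => /andP[_ /eqP].
  + move=> W y /memF[hW aW]; apply/negP => /andP[b c].
    exact: (Hind_triple hW (erefl _) b aW c).
  + move=> v; case: (V_cases v) => [->|[->|->]] //= _.
      by exists v.2; left.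
    by exists (v.2 - a); right; rewrite subrK.
- apply: (@card_code F p2 [set a] (fun y => (p0, y)) (fun y => (p1, a - y))).
  + by move=> W; rewrite inE => /andP[_ /eqP].
  + move=> W y /memF[hW aW]; apply/negP => /andP[b c].
    by apply: (Hind_triple hW _ b c aW); rewrite addsub'.
  + move=> v; case: (V_cases v) => [->|[->|->]] //= _.
      by exists v.2; left.
    by exists (a - v.2); right; rewrite subKr'.
Qed.

Lemma card_region (i : 'I_3) : #|[set v : V | v.1 != i]| = (2 * n.+1)%N.
Proof.
have -> : [set v : V | v.1 != i] = setX [set~ i] setT.
  by apply/setP => -[j x]; rewrite !inE andbT.
by rewrite cardsX cardsC1 cardsT !card_ord.
Qed.

Lemma setE_eq (i : 'I_3) :
  [set W : {set V} | pt i W == set0] = powerset [set v : V | v.1 != i].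
Proof.
apply/setP => W; rewrite inE powersetE; apply/eqP/subsetP.
  move=> h [j x] xW; rewrite inE /=; apply/eqP => ji; subst j.
  by move: (in_set0 x); rewrite -h inE xW.
move=> h; apply/setP => x; rewrite !inE; apply/negP => xW.
by move: (h _ xW); rewrite inE /= eqxx.
Qed.

Lemma card_E (i : 'I_3) : #|[set W : {set V} | pt i W == set0]| = (2 ^ (2 * n.+1))%N.
Proof. by rewrite setE_eq card_powerset card_region. Qed.

Definition Gset := [set W : {set V} | Hind W && [forall i, (1 < #|pt i W|)%N]].

Lemma card_S1 (i : 'I_3) :
  (#|[set W : {set V} | Hind W && (#|pt i W| == 1%N)]| <= n.+1 * 3 ^ n.+1)%N.
Proof.
apply: leq_trans (@card_cover _ _ _ setT (fun a : D => [set W : {set V} | Hind W && (pt i W == [set a])]) _) _.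
  move=> W; rewrite inE => /andP[hW /cards1P[a ha]]; exists a; first by rewrite inE.
  by rewrite inE hW ha eqxx.
apply: (@leq_trans (\sum_(a in [set: D]) 3 ^ n.+1)%N).
  by apply: leq_sum => a _; exact: card_S.
by rewrite sum_nat_const cardsT card_ord.
Qed.

Lemma card_upper :
  (#|[set W : {set V} | Hind W]| <=
     3 * 2 ^ (2 * n.+1) + 3 * (n.+1 * 3 ^ n.+1) + #|Gset|)%N.
Proof.
set E := fun i => [set W : {set V} | pt i W == set0].
set S := fun i => [set W : {set V} | Hind W && (#|pt i W| == 1%N)].
have sub : [set W : {set V} | Hind W] \subset
  ((E p0 :|: E p1) :|: E p2) :|: ((S p0 :|: S p1) :|: S p2) :|: Gset.
  apply/subsetP => W; rewrite inE => hW; rewrite !inE hW /=.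
  apply/orP; case: (boolP [forall i : 'I_3, (1 < #|pt i W|)%N]) => hf; first by right.
  left; move: hf; rewrite negb_forall => /existsP[i]; rewrite -leqNgt.
  case: (I_cases i) => [->|[->|->]];
    case e: #|_| => [|[|m]] //= _; move/eqP: e; rewrite ?cards_eq0 => h; by rewrite ?h ?eqxx ?orbT.
apply: leq_trans (subset_leq_card sub) _.
apply: leq_trans (cardU_le _ _) _.
have hE : forall i, #|E i| = (2 ^ (2 * n.+1))%N by move=> i; exact: card_E.
have hS : forall i, (#|S i| <= n.+1 * 3 ^ n.+1)%N by move=> i; exact: card_S1.
have u1 := cardU_le (E p0 :|: E p1) (E p2).
have u2 := cardU_le (E p0) (E p1).
have u3 := cardU_le (S p0 :|: S p1) (S p2).
have u4 := cardU_le (S p0) (S p1).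
have u5 := cardU_le ((E p0 :|: E p1) :|: E p2) ((S p0 :|: S p1) :|: S p2).
have := hE p0; have := hE p1; have := hE p2; have := hS p0; have := hS p1; have := hS p2.
lia.
Qed.

Lemma card_G :
  (#|Gset| <= \sum_(al in [set al : Anch | Good al]) gcount (adjA al) setT)%N.
Proof.
apply: card_cover => W; rewrite inE => /andP[hW /forallP hp].
have [a1 [a2 [A1 A2 na]]] := card_gt1P (hp p0).
have [b1 [b2 [B1 B2 nb]]] := card_gt1P (hp p1).
have [c1 [c2 [C1 C2 nc]]] := card_gt1P (hp p2).
exists (a1, a2, b1, b2, c1, c2); first by rewrite inE /= na nb nc.
rewrite inE subsetT /=; rewrite !inE in A1 A2 B1 B2 C1 C2.
exact: anch_gind.
Qed.

Lemma card_G_R :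
  (INR #|Gset| <= INR (n.+1 ^ 6) * (2 ^ (3 * n.+1) / (53/50) ^ (12 * n.+1)))%R.
Proof.
have q0 : (0 < (53/50) ^ (12 * n.+1))%R by apply: pow_lt; lra.
have h0 : (INR #|Gset| <= INR (\sum_(al in [set al : Anch | Good al]) gcount (adjA al) setT))%R.
  by apply: le_INR; apply/leP; exact: card_G.
apply: Rle_trans h0 _.
apply: Rle_trans (INR_sum_le (K := (2 ^ (3 * n.+1) / (53/50) ^ (12 * n.+1))%R) _) _.
  move=> al; rewrite inE => g; have := gcount_anch g.
  move=> h; apply/(Rmult_le_reg_r _ _ _ q0); rewrite /Rdiv Rmult_assoc Rinv_l; lra.
apply: Rmult_le_compat_r.
  apply: Rmult_le_pos; first by apply: pow_le; lra.
  by apply/Rlt_le/Rinv_0_lt_compat.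
apply: le_INR; apply/leP; apply: leq_trans (max_card _) _.
by rewrite !card_prod !card_ord; rewrite !expnS expn0; lia.
Qed.

Definition Eset (i : 'I_3) := [set W : {set V} | pt i W == set0].

Lemma EE_sub (i j k : 'I_3) : (forall l, l = i \/ l = j \/ l = k) ->
  Eset i :&: Eset j \subset powerset (setX [set k] setT).
Proof.
move=> hl; apply/subsetP => W; rewrite !inE ?powersetE => /andP[/eqP hi /eqP hj].
apply/subsetP => -[l x] xW; rewrite !inE ?andbT.
case: (hl l) => [el|[el|el]]; subst l.
- by move: (in_set0 x); rewrite -hi inE xW.
- by move: (in_set0 x); rewrite -hj inE xW.
- by rewrite eqxx.
Qed.

Lemma card_EE (i j k : 'I_3) : (forall l, l = i \/ l = j \/ l = k) ->
  (#|Eset i :&: Eset j| <= 2 ^ n.+1)%N.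
Proof.
move=> hl; apply: leq_trans (subset_leq_card (EE_sub hl)) _.
by rewrite card_powerset cardsX cards1 cardsT card_ord mul1n.
Qed.

Definition mkW (f : {ffun D -> 'I_3}) : {set V} :=
  [set v : V | if v.1 == p0 then v.2 == 0 else f v.2 == v.1].

Lemma mkW_val (f : {ffun D -> 'I_3}) (y : D) : f y = (if (p1, y) \in mkW f then p1 else if (p2, y) \in mkW f then p2 else p0).
Proof.
rewrite !inE /=.
by case: (I_cases (f y)) => [->|[->|->]].
Qed.

Lemma mkW_inj : injective mkW.
Proof. by move=> f1 f2 e; apply/ffunP => y; rewrite mkW_val e -mkW_val. Qed.

Definition Phi := [set f : {ffun D -> 'I_3} | [exists y, f y == p1] && [exists y, f y == p2]].

Lemma card_Phi : (3 ^ n.+1 <= #|Phi| + 2 * 2 ^ n.+1)%N.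
Proof.
have N1 : (#|[set f : {ffun D -> 'I_3} | [forall y, f y != p1]]| <= 2 ^ n.+1)%N.
  apply: leq_trans (_ : _ <= #|ffun_on [set~ p1]|)%N _.
    apply: subset_leq_card; apply/subsetP => f; rewrite inE => /forallP h.
    by apply/ffun_onP => y; rewrite !inE h.
  by rewrite card_ffun_on cardsC1 !card_ord.
have N2 : (#|[set f : {ffun D -> 'I_3} | [forall y, f y != p2]]| <= 2 ^ n.+1)%N.
  apply: leq_trans (_ : _ <= #|ffun_on [set~ p2]|)%N _.
    apply: subset_leq_card; apply/subsetP => f; rewrite inE => /forallP h.
    by apply/ffun_onP => y; rewrite !inE h.
  by rewrite card_ffun_on cardsC1 !card_ord.
have sub : ~: Phi \subset [set f : {ffun D -> 'I_3} | [forall y, f y != p1]] :|: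
                         [set f : {ffun D -> 'I_3} | [forall y, f y != p2]].
  apply/subsetP => f; rewrite !inE negb_and !negb_exists.
  by case/orP => -> //; rewrite orbT.
have := cardsC Phi; rewrite card_ffun !card_ord => e.
have := subset_leq_card sub; have := cardU_le [set f : {ffun D -> 'I_3} | [forall y, f y != p1]]
                         [set f : {ffun D -> 'I_3} | [forall y, f y != p2]].
lia.
Qed.

Lemma mkW_Hind (f : {ffun D -> 'I_3}) : Hind (mkW f).
Proof.
apply/forallP => x; apply/forallP => y; rewrite !inE /=.
apply/negP => /and3P[/eqP -> /eqP h1 /eqP h2].
by move: h2; rewrite add0r h1.
Qed.

Lemma card_lower :
  (3 * 2 ^ (2 * n.+1) + 3 ^ n.+1 <= #|[set W : {set V} | Hind W]| + 5 * 2 ^ n.+1)%N.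
Proof.
set I := [set W : {set V} | Hind W].
set A := Eset p0; set B := Eset p1; set C := Eset p2.
set F := mkW @: Phi.
have hA : forall i, Eset i \subset I.
  by move=> i; apply/subsetP => W; rewrite !inE => /eqP /Hind_pt.
have hF : F \subset I by apply/subsetP => W /imsetP[f _ ->]; rewrite inE mkW_Hind.
have sub : ((A :|: B) :|: C) :|: F \subset I.
  by rewrite !subUset hF !hA.
have disj : ((A :|: B) :|: C) :&: F = set0.
  apply/setP => W; rewrite !inE; apply/negP => /andP[hW /imsetP[f]].
  rewrite inE => /andP[/existsP[y1 /eqP e1] /existsP[y2 /eqP e2]] eW; subst W.
  move: hW; rewrite /Eset ?inE.
  have nz : forall i z, (i, z) \in mkW f -> pt i (mkW f) != set0.
    by move=> i z hz; apply/set0Pn; exists z; rewrite inE.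
  rewrite (negbTE (nz p0 0 _)); last by rewrite inE /= eqxx.
  rewrite (negbTE (nz p1 y1 _)); last by rewrite inE /= e1.
  by rewrite (negbTE (nz p2 y2 _)) //; rewrite inE /= e2.
have cF : #|F| = #|Phi| by apply: card_imset; exact: mkW_inj.
have u1 := cardsUI A B.
have u2 := cardsUI (A :|: B) C.
have u3 := cardsUI ((A :|: B) :|: C) F.
rewrite disj cards0 in u3.
have u4 : (#|(A :|: B) :&: C| <= #|A :&: C| + #|B :&: C|)%N.
  by rewrite setIUl; apply: cardU_le.
have eAB := @card_EE p0 p1 p2 ltac:(by move=> l; case: (I_cases l) => [->|[->|->]]; auto).
have eAC := @card_EE p0 p2 p1 ltac:(by move=> l; case: (I_cases l) => [->|[->|->]]; auto).
have eBC := @card_EE p1 p2 p0 ltac:(by move=> l; case: (I_cases l) => [->|[->|->]]; auto).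
have cA := card_E p0; have cB := card_E p1; have cC := card_E p2.
rewrite -/(Eset p0) -/(Eset p1) -/(Eset p2) -/A -/B -/C in cA cB cC.
have cP := card_Phi.
rewrite -/A -/B -/C in eAB eAC eBC.
have := subset_leq_card sub.
lia.
Qed.

End Hyp.
Section Union.
Variables (V : finType) (E : {set {set V}}) (m : nat).

Definition slice (j : 'I_m) (W : {set ('I_m * V)}) : {set V} := [set v | (j, v) \in W].

Lemma union_indep (W : {set ('I_m * V)}) :
  independent (disj_union_edges E m) W = [forall j, independent E (slice j W)].
Proof.
apply/forallP/forallP.
  move=> h j; apply/forallP => f; apply/implyP => fE; apply/negP => fs.
  have := h [set (j, v) | v in f]; rewrite inE.
  have -> : [exists j0, exists f0 in E, [set (j, v) | v in f] == [set (j0, v) | v in f0]].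
    by apply/existsP; exists j; apply/existsP; exists f; rewrite fE eqxx.
  move=> /= /negP; apply; apply/subsetP => p /imsetP[v vf ->].
  by move/subsetP: fs => /(_ v vf); rewrite inE.
move=> h e; apply/implyP; rewrite inE => /existsP[j /existsP[f /andP[fE /eqP ->]]].
apply/negP => s; move/forallP: (h j) => /(_ f); rewrite fE /= => /negP; apply.
apply/subsetP => v vf; rewrite inE; move/subsetP: s; apply.
by apply/imsetP; exists v.
Qed.

Lemma num_indep_union : num_indep (disj_union_edges E m) = (num_indep E ^ m)%N.
Proof.
set U := [set W : {set ('I_m * V)} | independent (disj_union_edges E m) W].
set I := [set W : {set V} | independent E W].
rewrite /num_indep -/U -/I.
have -> : (#|I| ^ m = #|[set F : {ffun 'I_m -> {set V}} | F \in ffun_on I]|)%N.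
  rewrite (eq_card (B := ffun_on I)); last by move=> F; rewrite inE.
  by rewrite card_ffun_on card_ord.
apply/eqP; rewrite eqn_leq; apply/andP; split.
  have inj : injective (fun W : {set ('I_m * V)} => [ffun j => slice j W]).
    move=> W1 W2 e; apply/setP => -[j v].
    have := congr1 (fun F : {ffun 'I_m -> {set V}} => v \in F j) e.
    by rewrite /= !ffunE !inE.
  rewrite -(card_imset (mem U) inj); apply: subset_leq_card.
  apply/subsetP => F /imsetP[W]; rewrite /U ?inE union_indep => /forallP hW ->.
  rewrite ?inE; apply/ffun_onP => j; rewrite ffunE inE; exact: hW.
have inj : injective (fun F : {ffun 'I_m -> {set V}} => [set p : 'I_m * V | p.2 \in F p.1]).
  move=> F1 F2 e; apply/ffunP => j; apply/setP => v.
  by have := congr1 (fun W : {set ('I_m * V)} => (j, v) \in W) e; rewrite /= !inE.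
rewrite -(card_imset (mem [set F : {ffun 'I_m -> {set V}} | F \in ffun_on I]) inj); apply: subset_leq_card.
apply/subsetP => W /imsetP[F]; rewrite inE => /ffun_onP hF ->; rewrite inE union_indep.
apply/forallP => j; have := hF j; rewrite inE.
congr (independent E _); apply/setP => v; by rewrite !inE.
Qed.

End Union.

Section Ana.
Local Open Scope R_scope.

Lemma ln_le_sub1 (y : R) : 0 < y -> ln y <= y - 1.
Proof. move=> hy; have := exp_ineq1_le (ln y); rewrite exp_ln //; lra. Qed.

Lemma ln_le' (x y : R) : 0 < x -> x <= y -> ln x <= ln y.
Proof.
move=> hx hxy; case: (Rle_lt_or_eq_dec _ _ hxy) => h.
  by apply: Rlt_le; apply: ln_increasing.
by rewrite h; apply: Rle_refl.
Qed.

Lemma ln1p_upper (e : R) : 0 <= e -> ln (1 + e) <= e.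
Proof. move=> he; have := ln_le_sub1 (y := 1 + e) ltac:(lra); lra. Qed.

Lemma ln1p_lower (u : R) : 0 <= u -> u <= 1 -> u / 2 <= ln (1 + u).
Proof.
move=> h0 h1.
have hp : 0 < 1 + u by lra.
have := ln_le_sub1 (y := / (1 + u)) (Rinv_0_lt_compat _ hp).
rewrite ln_Rinv //.
have : u / 2 <= 1 - / (1 + u).
  apply: (Rmult_le_reg_r (1 + u)) => //.
  rewrite Rmult_minus_distr_r Rinv_l; [nra|lra].
lra.
Qed.

Lemma ln2_bounds : / 2 < ln 2 /\ ln 2 <= 1.
Proof.
split; first exact: ln_lt_2.
have : 2 <= exp 1 by have := exp_ineq1_le 1; lra.
move=> h; rewrite -(ln_exp 1); apply: ln_le' => //; lra.
Qed.

Lemma ln_4pow (d : nat) : ln (3 * 4 ^ d) = ln 3 + 2 * INR d * ln 2.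
Proof.
rewrite ln_mult; [|lra|apply: pow_lt; lra].
rewrite ln_pow; last lra.
have -> : 4 = 2 * 2 by lra.
rewrite ln_mult; lra.
Qed.

Definition cst : R := / 10 ^ 20.
Definition rho : R := 2 / (53/50) ^ 12.
Definition sig : R := rho / (1 - cst).

Lemma rho_bounds : 3 / 4 <= rho <= 99394 / 100000.
Proof. rewrite /rho; simpl; split; apply: (Rmult_le_reg_r ((53/50)*((53/50)*((53/50)*((53/50)*((53/50)*((53/50)*((53/50)*((53/50)*((53/50)*((53/50)*((53/50)*((53/50)*1)))))))))))));
  try (simpl; lra); rewrite /Rdiv Rmult_assoc Rinv_l; simpl; lra. Qed.


Lemma cst_pos : 0 < cst.
Proof. rewrite /cst; apply: Rinv_0_lt_compat; apply: pow_lt; lra. Qed.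

Lemma cst_small : cst <= / 10 ^ 20.
Proof. rewrite /cst; lra. Qed.

Lemma ten20 : 10 ^ 20 = 100000000000000000000.
Proof. simpl; lra. Qed.

Lemma sig_bounds : 0 <= sig <= 99395 / 100000.
Proof.
have [r1 r2] := rho_bounds.
have c0 := cst_pos.
have c1 : cst <= / 100000000000000000000 by rewrite /cst ten20; lra.
have hc : 0 < 1 - cst by lra.
rewrite /sig; split.
  apply: Rmult_le_pos; first lra; by apply/Rlt_le/Rinv_0_lt_compat.
apply: (Rmult_le_reg_r (1 - cst)) => //.
rewrite /Rdiv Rmult_assoc Rinv_l; lra.
Qed.

Lemma step5 (N : R) : 1 <= N -> (N + 1) ^ 5 <= N ^ 5 + 31 * N ^ 4.
Proof.
move=> h.
have h2 : N <= N ^ 2 by simpl; nra.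
have h3 : N ^ 2 <= N ^ 3 by simpl; nra.
have h4 : N ^ 3 <= N ^ 4 by simpl; nra.
have : (N + 1) ^ 5 = N ^ 5 + 5 * N ^ 4 + 10 * N ^ 3 + 10 * N ^ 2 + 5 * N + 1 by simpl; ring.
lra.
Qed.

Lemma pow_le1' (x : R) (k : nat) : 0 <= x <= 1 -> x ^ k <= 1.
Proof. move=> h; rewrite -(pow1 k); exact: pow_incr. Qed.

Lemma poly_exp (d : nat) : INR d ^ 5 * sig ^ d <= 7000 ^ 5.
Proof.
have [s0 s1] := sig_bounds.
elim: d => [|d IH]; first by simpl; lra.
rewrite S_INR (_ : sig ^ d.+1 = sig * sig ^ d) //.
set N := INR d.
have pN : 0 <= N by apply: pos_INR.
have ps : 0 <= sig ^ d by apply: pow_le.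
case: (Rle_lt_dec (N + 1) 7000) => hN.
  have p1 : sig ^ d <= 1 by apply: pow_le1'; lra.
  have q : (N + 1) ^ 5 <= 7000 ^ 5 by apply: pow_incr; lra.
  have h5 : 0 <= (N + 1) ^ 5 by apply: pow_le; lra.
  apply: Rle_trans q; rewrite -{2}(Rmult_1_r ((N + 1) ^ 5)).
  apply: Rmult_le_compat_l => //; nra.
apply: Rle_trans IH.
have h5 := step5 (N := N) ltac:(lra).
have pN4 : 0 < N ^ 4 by apply: pow_lt; lra.
have key : sig * (N + 1) ^ 5 <= N ^ 5.
  have e5 : N ^ 5 = N * N ^ 4 by simpl; ring.
  have t : sig * (N + 31) <= N by nra.
  have t2 : N ^ 4 * (sig * (N + 31)) <= N ^ 4 * N by apply: Rmult_le_compat_l; lra.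
  have t3 : sig * (N + 1) ^ 5 <= sig * (N ^ 5 + 31 * N ^ 4) by apply: Rmult_le_compat_l.
  nra.
have -> : (N + 1) ^ 5 * (sig * sig ^ d) = (sig * (N + 1) ^ 5) * sig ^ d by ring.
by apply: Rmult_le_compat_r.
Qed.

Lemma div_le_from (a b c : R) : 0 < c -> a <= b * c -> a / c <= b.
Proof.
move=> hc h; apply: (Rmult_le_reg_r c) => //.
rewrite /Rdiv Rmult_assoc Rinv_l; lra.
Qed.

Lemma le_div_from (a b c : R) : 0 < c -> a * c <= b -> a <= b / c.
Proof.
move=> hc h; apply: (Rmult_le_reg_r c) => //.
rewrite /Rdiv Rmult_assoc Rinv_l; lra.
Qed.

Lemma ana_upper (d : nat) (x : R) : (1 <= d)%N -> 0 < x ->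
  x <= 3 * 4 ^ d + 3 * INR d * 3 ^ d + INR d ^ 6 * (8 / (53/50) ^ 12) ^ d ->
  log2 x / (3 * INR d) <= 2 / 3 + log2 3 / (3 * INR d) + / cst * (1 - cst) ^ d.
Proof.
move=> hd hx hub.
have D1 : 1 <= INR d.
  by rewrite (_ : 1 = INR 1) //; apply: le_INR; apply/leP.
set D := INR d in D1 hub *.
have [r1 r2] := rho_bounds.
have [l1 l2] := ln2_bounds.
have c0 := cst_pos.
have c1 : cst <= / 100000000000000000000 by rewrite /cst ten20; lra.
have e8 : 8 / (53/50) ^ 12 = 4 * rho by rewrite /rho; lra.
rewrite e8 Rpow_mult_distr in hub.
have p4 : 0 < 4 ^ d by apply: pow_lt; lra.
have prho : 0 <= rho ^ d by apply: pow_le; lra.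
have h3 : 3 ^ d <= 4 ^ d * rho ^ d by rewrite -Rpow_mult_distr; apply: pow_incr; lra.
have hD6 : D <= D ^ 6.
  have : 1 <= D ^ 5 by rewrite -(pow1 5); apply: pow_incr; lra.
  rewrite (_ : D ^ 6 = D * D ^ 5); [nra|by simpl; ring].
have hx2 : x <= 3 * 4 ^ d * (1 + 4 / 3 * (D ^ 6 * rho ^ d)).
  have : 3 * D * 3 ^ d <= 3 * D ^ 6 * (4 ^ d * rho ^ d).
    have : 0 <= 3 ^ d by apply: pow_le; lra.
    have : 0 <= 4 ^ d * rho ^ d by nra.
    nra.
  nra.
set e := 4 / 3 * (D ^ 6 * rho ^ d) in hx2.
have e0 : 0 <= e.
  rewrite /e; have : 0 <= D ^ 6 by apply: pow_le; lra.
  by move=> ?; nra.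
have lnx : ln x <= ln 3 + 2 * D * ln 2 + e.
  have := ln_le' hx hx2.
  rewrite ln_mult; [|nra|lra]; rewrite ln_4pow -/D.
  have := ln1p_upper e0; lra.
have hsig : rho = sig * (1 - cst) by rewrite /sig; field; lra.
have hP : 0 < (1 - cst) ^ d by apply: pow_lt; lra.
set P := (1 - cst) ^ d in hP.
have he : e <= 4 / 3 * 7000 ^ 5 * D * P.
  rewrite /e hsig Rpow_mult_distr -/P.
  have := poly_exp d; rewrite -/D => hp.
  have -> : D ^ 6 * (sig ^ d * P) = D * P * (D ^ 5 * sig ^ d) by simpl; ring.
  have : 0 <= D * P by nra.
  nra.
have T : 4 / 3 * 7000 ^ 5 * cst <= 3 * ln 2 by simpl; lra.
have key : ln x <= (2 / 3 + log2 3 / (3 * D) + / cst * P) * (3 * D * ln 2).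
  have -> : (2 / 3 + log2 3 / (3 * D) + / cst * P) * (3 * D * ln 2)
          = 2 * D * ln 2 + ln 3 + 3 * D * ln 2 * P * / cst.
    rewrite /log2; field; lra.
  have : 4 / 3 * 7000 ^ 5 * D * P <= 3 * D * ln 2 * P * / cst.
    apply: le_div_from => //.
    have : 0 <= D * P by nra.
    nra.
  lra.
have -> : log2 x / (3 * D) = ln x / (3 * D * ln 2) by rewrite /log2; field; lra.
by apply: div_le_from => //; nra.
Qed.

Lemma pow32 (k : nat) : 10 * 2 ^ (6 + k) <= 3 ^ (6 + k).
Proof.
elim: k => [|k IH]; first by simpl; lra.
rewrite addnS; move: IH; move: (6 + k)%N => N IH /=.
have : 0 <= 2 ^ N by apply: pow_le; lra.
lra.
Qed.

Lemma ana_lower (d : nat) (x : R) : (7 <= d)%N ->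
  3 * 4 ^ d + 3 ^ d - 5 * 2 ^ d <= x ->
  2 / 3 + log2 3 / (3 * INR d) + cst * (3 ^ d / (INR d * 4 ^ d)) <= log2 x / (3 * INR d).
Proof.
move=> hd hlb.
have D1 : 1 <= INR d.
  by rewrite (_ : 1 = INR 1) //; apply: le_INR; apply/leP; apply: leq_trans hd.
set D := INR d in D1 *.
have [l1 l2] := ln2_bounds.
have c0 := cst_pos.
have c1 : cst <= / 100000000000000000000 by rewrite /cst ten20; lra.
have h10 : 10 * 2 ^ d <= 3 ^ d.
  have -> : d = (6 + (d - 6))%coq_nat by move/leP: hd; lia.
  exact: pow32.
have p4 : 0 < 4 ^ d by apply: pow_lt; lra.
have p3 : 0 < 3 ^ d by apply: pow_lt; lra.
have h34 : 3 ^ d <= 4 ^ d by apply: pow_incr; lra.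
set u := 3 ^ d / (6 * 4 ^ d).
have u0 : 0 <= u by apply: Rlt_le; apply: Rdiv_lt_0_compat; lra.
have u1 : u <= 1 by apply: div_le_from; lra.
have hu : 3 * 4 ^ d * u = 3 ^ d / 2 by rewrite /u; field; lra.
have hx2 : 3 * 4 ^ d * (1 + u) <= x by nra.
have hx0 : 0 < x by nra.
have lnx : ln 3 + 2 * D * ln 2 + u / 2 <= ln x.
  have := ln_le' (x := 3 * 4 ^ d * (1 + u)) ltac:(nra) hx2.
  rewrite ln_mult; [|nra|lra]; rewrite ln_4pow -/D.
  have := ln1p_lower u0 u1; lra.
have -> : log2 x / (3 * D) = ln x / (3 * D * ln 2) by rewrite /log2; field; lra.
apply: le_div_from; first nra.
have -> : (2 / 3 + log2 3 / (3 * D) + cst * (3 ^ d / (D * 4 ^ d))) * (3 * D * ln 2)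
        = 2 * D * ln 2 + ln 3 + 18 * cst * ln 2 * u.
  rewrite /log2 /u; field; lra.
have : 18 * cst * ln 2 * u <= u / 2.
  have : 18 * cst * ln 2 <= 1 / 2 by nra.
  nra.
lra.
Qed.

End Ana.
Section MainProof.
Local Open Scope R_scope.

Lemma INR_2pow2 (d : nat) : INR (expn 2 (2 * d)) = 4 ^ d.
Proof.
rewrite INR_expn (_ : INR 2 = 2); last by simpl; lra.
by rewrite -multE pow_mult; congr (_ ^ _); simpl; lra.
Qed.

Lemma INR_pow' (a d : nat) : INR (expn a d) = INR a ^ d.
Proof. exact: INR_expn. Qed.

Lemma conv8 (d : nat) : 2 ^ (3 * d) / (53/50) ^ (12 * d) = (8 / (53/50) ^ 12) ^ d.
Proof.
rewrite -!multE !pow_mult (_ : 2 ^ 3 = 8); last by simpl; lra.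
by rewrite /Rdiv [RHS]Rpow_mult_distr pow_inv.
Qed.

Lemma lowR (I A B C : nat) : (3 * A + B <= I + 5 * C)%N ->
  3 * INR A + INR B <= INR I + 5 * INR C.
Proof.
move/leP/le_INR; rewrite INR_add INR_mul [INR (I + _)]INR_add INR_mul.
move=> h; simpl in h; lra.
Qed.

Lemma upR (I A B G e : nat) : (I <= 3 * A + 3 * (e * B) + G)%N ->
  INR I <= 3 * INR A + 3 * (INR e * INR B) + INR G.
Proof.
move/leP/le_INR; rewrite !INR_add !INR_mul.
move=> h; simpl in h; lra.
Qed.

Lemma bounds_Hmod (n : nat) :
  let x := INR (num_indep (Hmod_edges n.+1)) in
  [/\ 0 < x, 3 * 4 ^ n.+1 + 3 ^ n.+1 - 5 * 2 ^ n.+1 <= x &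
      x <= 3 * 4 ^ n.+1 + 3 * INR n.+1 * 3 ^ n.+1 + INR n.+1 ^ 6 * (8 / (53/50) ^ 12) ^ n.+1].
Proof.
have eI : num_indep (Hmod_edges n.+1) = #|[set W : {set Hmod_vertex n.+1} | Hind W]|.
  by apply: eq_card => W; rewrite !inE indepP.
rewrite eI; cbv zeta.
split.
- apply: lt_0_INR; apply/ltP; apply/card_gt0P; exists set0; rewrite inE.
  by apply/forallP => x; apply/forallP => y; rewrite inE.
- have := lowR (card_lower n); rewrite INR_2pow2 !INR_pow'.
  rewrite (_ : INR 3 = 3); last by simpl; lra.
  rewrite (_ : INR 2 = 2); last by simpl; lra.
  lra.
- have := upR (card_upper n); rewrite INR_2pow2 !INR_pow'.
  rewrite (_ : INR 3 = 3); last by simpl; lra.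
  have := card_G_R n; rewrite INR_pow' conv8.
  lra.
Qed.

End MainProof.

Theorem mainTheorem2 :
  exists c : R, (0 < c)%R /\
  exists d0 : nat, forall d m : nat, (d0 <= d)%N -> (1 <= m)%N ->
    let n := (3 * d * m)%N in
    let iH := num_indep (disj_union_edges (Hmod_edges d) m) in
    (2 / 3 + log2 3 / (3 * INR d) + c * (3 ^ d / (INR d * 4 ^ d))
       <= log2 (INR iH) / INR n
     <= 2 / 3 + log2 3 / (3 * INR d) + / c * (1 - c) ^ d)%R.
Proof.
exists cst; split; first exact: cst_pos.
exists 7%N => d m hd hm.
cbv zeta.
case: d hd => [|n] hd //.
rewrite num_indep_union.
have [x0 xl xu] := bounds_Hmod n.
set x := INR (num_indep (Hmod_edges n.+1)) in x0 xl xu.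
have hm' : (0 < INR m)%R by apply: lt_0_INR; apply/ltP.
have hD : (0 < INR n.+1)%R by apply: lt_0_INR; apply/ltP.
have -> : (log2 (INR (num_indep (Hmod_edges n.+1) ^ m)) / INR (3 * n.+1 * m)
          = log2 x / (3 * INR n.+1))%R.
  rewrite INR_pow' -/x /log2 ln_pow // !INR_mul (_ : INR 3 = 3%R); last by simpl; lra.
  have := ln2_bounds => -[l1 l2].
  field; lra.
split.
- exact: ana_lower.
- exact: ana_upper.
Qed.
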